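(* Let $n\ge0$ be an integer and $t,x_0,x_1,\dots,x_n$ commuting indeterminates. For nonnegative integers $m_1,\dots,m_n$ put $M_j=m_j+m_{j+1}+\cdots+m_n$ ($M_{n+1}=0$). Then $$\sum_{m_1,\dots,m_n\ge0}\frac{(1+tx_0)^{n-M_1}}{(n-M_1)!}\prod_{j=1}^n\frac{[t(x_j-x_{j-1})]^{m_j}\,(n-j+1-M_{j+1})}{m_j!}=\prod_{i=1}^n(1+tx_i),$$ where $1/(n-M_1)!$ is interpreted as $0$ when $M_1>n$. *)

(* Defs.v *)
From HB Require Import structures.
From mathcomp Require Import all_boot all_order all_algebra.
Set Implicit Arguments. Unset Strict Implicit. Unset Printing Implicit Defensive.
Import Order.TTheory GRing.Theory Num.Theory.
Local Open Scope ring_scope.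

(* Paper's m_1..m_n are encoded 0-based: m i = m_{i+1} for i : 'I_n.
   Msuf m k = sum_{i >= k} m i, so that M_{k+1} (paper) = Msuf m k;
   in particular M_1 = Msuf m 0 and M_{j+1} = Msuf m j. *)
Definition Msuf (n : nat) (m : 'I_n -> nat) (k : nat) : nat :=
  (\sum_(i < n | (k <= i)%N) m i)%N.

Definition invfact_or0 (R : fieldType) (n M : nat) : R :=
  if (M <= n)%N then ((n - M)`!)%:R^-1 else 0.

Definition term (R : fieldType) (n : nat) (t : R) (x : nat -> R)
    (m : 'I_n -> nat) : R :=
  invfact_or0 R n (Msuf m 0) * (1 + t * x 0%N) ^+ (n - Msuf m 0)
  * \prod_(i < n)
      ((t * (x i.+1 - x i)) ^+ (m i)
       * ((n - i)%:R - (Msuf m i.+1)%:R)   (* n - j + 1 - M_{j+1}, j = i+1 *)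
       / ((m i)`!)%:R).
Arguments term {R} n t x m.

(* Main.v *)
Require Import Defs.
From HB Require Import structures.
From mathcomp Require Import all_boot all_order all_algebra.
Import Order.TTheory GRing.Theory Num.Theory.
Local Open Scope ring_scope.

Section S.
Variable R : fieldType.
Hypothesis charR0 : [pchar R] =i pred0.

Lemma natnz (k : nat) : (k.+1)%:R != 0 :> R.
Proof. by rewrite ((pcharf0P R).1 charR0). Qed.

Lemma factnz (k : nat) : (k`!)%:R != 0 :> R.
Proof. by rewrite ((pcharf0P R).1 charR0) -lt0n fact_gt0. Qed.

Lemma coefL (N a : nat) : (a <= N.+1)%N ->
  ((N.+1 - a)`!)%:R^-1 * ((N.+1)%:R / (a`!)%:R) = (N`!)%:R^-1 * ('C(N.+1, a))%:R :> R.
Proof.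
move=> ha.
have HC : ('C(N.+1, a))%:R = (N.+1)%:R * (N`!)%:R / ((a`!)%:R * ((N.+1 - a)`!)%:R) :> R.
  apply: (canRL (mulfK _)); first by rewrite mulf_neq0 ?factnz.
  by rewrite -!natrM bin_fact // factS.
rewrite HC invfM !mulrA [N`!%:R^-1 * _]mulrC -[N.+1%:R * _ * N`!%:R]mulrA mulVf ?factnz // mulr1.
by rewrite -mulrA mulrC.
Qed.

Lemma L (K n M : nat) (y0 d : R) : (n.+2 <= K)%N ->
 \sum_(a < K) invfact_or0 R n.+1 (a + M) * y0 ^+ (n.+1 - (a + M))
     * (d ^+ a * ((n.+1)%:R - M%:R) / (a`!)%:R)
 = (y0 + d) * (invfact_or0 R n M * (y0 + d) ^+ (n - M)).
Proof.
move=> hK; rewrite {2}/invfact_or0.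
case: (leqP M n) => hM; last first.
  rewrite mul0r mulr0; apply: big1 => a _.
  case: (eqVneq M n.+1) => [->|hne]; first by rewrite subrr mulr0 mul0r mulr0.
  rewrite /invfact_or0 ifF ?mul0r //; apply/negbTE; rewrite -ltnNge.
  by apply: leq_trans (leq_addl _ _); rewrite ltn_neqAle eq_sym hne hM.
have [N hn] : exists N, n = (N + M)%N by exists (n - M)%N; rewrite subnK.
subst n; rewrite addnK.
rewrite (bigID (fun a : 'I_K => (a < N.+2)%N)) /= [X in _ + X]big1 ?addr0; last first.
  move=> a; rewrite -leqNgt => ha; rewrite /invfact_or0 ifF ?mul0r //.
  by apply/negbTE; rewrite -ltnNge -addSn ltn_add2r.
have E := big_ord_widen K (fun a => invfact_or0 R (N+M).+1 (a + M) * y0 ^+ ((N+M).+1 - (a + M))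
     * (d ^+ a * (((N+M).+1)%:R - M%:R) / (a`!)%:R)) (_ : (N.+2 <= K)%N).
rewrite /= in E; rewrite -E; last by rewrite (leq_trans _ hK) // ltnS ltnS leq_addr.
rewrite mulrCA -exprS exprDn mulr_sumr; apply: eq_bigr => [[a ha]] _ /=.
have ha' : (a + M <= (N + M).+1)%N by rewrite -addSn leq_add2r -ltnS.
have e1 : ((N + M).+1 - (a + M) = N.+1 - a)%N by rewrite -addSn subnDr.
rewrite /invfact_or0 ha' e1 -natrB; last by rewrite -addSn leq_addl.
rewrite -addSn addnK.
rewrite -[_ *+ 'C(_, _)]mulr_natr [RHS]mulrCA -coefL // !mulrA; congr (_ * _ * _).
by rewrite [RHS]mulrC mulrA.
Qed.

Definition consf K n (a : 'I_K) (g : {ffun 'I_n -> 'I_K}) : {ffun 'I_n.+1 -> 'I_K} :=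
  [ffun i => if unlift ord0 i is Some j then g j else a].

Arguments consf {K n}.

Lemma consf0 K n a g : @consf K n a g ord0 = a.
Proof. by rewrite ffunE unlift_none. Qed.

Lemma consfS K n a g j : @consf K n a g (lift ord0 j) = g j.
Proof. by rewrite ffunE liftK. Qed.

Lemma Msuf_S n (f : 'I_n.+1 -> nat) k :
  Msuf f k.+1 = Msuf (fun i : 'I_n => f (lift ord0 i)) k.
Proof.
rewrite /Msuf big_mkcond big_ord_recl /= add0n [RHS]big_mkcond.
by apply: eq_bigr => i _; rewrite /bump /= add1n ltnS.
Qed.

Lemma Msuf_0 n (f : 'I_n.+1 -> nat) :
  Msuf f 0 = (f ord0 + Msuf (fun i : 'I_n => f (lift ord0 i)) 0)%N.
Proof.
rewrite /Msuf big_mkcond big_ord_recl /= [X in (_ + X)%N = _]big_mkcond.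
by congr (_ + _)%N.
Qed.

Definition P n (t : R) (x : nat -> R) (m : 'I_n -> nat) : R :=
  \prod_(i < n)
      ((t * (x i.+1 - x i)) ^+ (m i)
       * ((n - i)%:R - (Msuf m i.+1)%:R)
       / ((m i)`!)%:R).

Lemma term_S n t x (m : 'I_n.+1 -> nat) :
 term n.+1 t x m = invfact_or0 R n.+1 (m ord0 + Msuf (fun i : 'I_n => m (lift ord0 i)) 0)
   * (1 + t * x 0%N) ^+ (n.+1 - (m ord0 + Msuf (fun i : 'I_n => m (lift ord0 i)) 0))
   * ((t * (x 1%N - x 0%N)) ^+ m ord0 * ((n.+1)%:R - (Msuf (fun i : 'I_n => m (lift ord0 i)) 0)%:R)
       / ((m ord0)`!)%:R)
   * P n t (fun k => x k.+1) (fun i : 'I_n => m (lift ord0 i)).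
Proof.
rewrite /term Msuf_0 big_ord_recl -!mulrA; congr (_ * (_ * _)).
rewrite /= subn0 Msuf_S; congr (_ * _).
by congr (_ * (_ * _)); apply: eq_bigr => i _; rewrite /bump /= add1n subSS Msuf_S.
Qed.


Lemma Msuf_ext n (f1 f2 : 'I_n -> nat) k : f1 =1 f2 -> Msuf f1 k = Msuf f2 k.
Proof. by move=> e; apply: eq_bigr => i _; rewrite e. Qed.

Lemma P_ext n t x (f1 f2 : 'I_n -> nat) : f1 =1 f2 -> P n t x f1 = P n t x f2.
Proof. by move=> e; apply: eq_bigr => i _; rewrite e (@Msuf_ext _ _ _ _ e). Qed.

Lemma term_consf K n (t : R) (x : nat -> R) (a : 'I_K) (g : {ffun 'I_n -> 'I_K}) :
 term n.+1 t x (fun i => nat_of_ord (consf a g i)) =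
   invfact_or0 R n.+1 (a + Msuf (fun i : 'I_n => nat_of_ord (g i)) 0)
   * (1 + t * x 0%N) ^+ (n.+1 - (a + Msuf (fun i : 'I_n => nat_of_ord (g i)) 0))
   * ((t * (x 1%N - x 0%N)) ^+ a * ((n.+1)%:R - (Msuf (fun i : 'I_n => nat_of_ord (g i)) 0)%:R)
       / (a`!)%:R)
   * P n t (fun k => x k.+1) (fun i : 'I_n => nat_of_ord (g i)).
Proof.
have e : (fun i : 'I_n => nat_of_ord (consf a g (lift ord0 i))) =1 (fun i => nat_of_ord (g i)).
  by move=> i; rewrite consfS.
by rewrite term_S consf0 (@Msuf_ext _ _ _ _ e) (@P_ext _ _ _ _ _ e).
Qed.

Lemma main_gen n : forall K (x : nat -> R) t, (n < K)%N ->
  \sum_(m : {ffun 'I_n -> 'I_K}) term n t x (fun i => nat_of_ord (m i))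
  = \prod_(i < n) (1 + t * x i.+1).
Proof.
elim: n => [|n IH] K x t hK.
  rewrite big_ord0.
  have e : forall m : {ffun 'I_0 -> 'I_K}, term 0 t x (fun i => nat_of_ord (m i)) = 1.
    by move=> m; rewrite /term /Msuf !big_ord0 /invfact_or0 /= invr1 !mulr1.
  by rewrite (eq_bigr _ (fun m _ => e m)) sumr_const card_ffun !card_ord.
rewrite (reindex (fun p : 'I_K * {ffun 'I_n -> 'I_K} => consf p.1 p.2)) /=; last first.
  exists (fun f => (f ord0, [ffun j => f (lift ord0 j)])) => [[a g]|f] _ /=.
    by rewrite consf0; congr pair; apply/ffunP => j; rewrite ffunE consfS.
  by apply/ffunP => i; rewrite ffunE; case: unliftP => [j ->|->]; rewrite ?ffunE.
rewrite -(pair_bigA _ (fun a g => term n.+1 t x (fun i : 'I_n.+1 => nat_of_ord (consf a g i)))) /=.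
rewrite exchange_big /= big_ord_recl -(IH K (fun k => x k.+1) t) ?(ltn_trans _ hK) //.
rewrite mulr_sumr; apply: eq_bigr => g _.
under eq_bigr => a _ do rewrite term_consf.
rewrite -mulr_suml L //.
have -> : 1 + t * x 0%N + t * (x 1%N - x 0%N) = 1 + t * x 1%N.
  by rewrite mulrBr addrA addrAC addrK.
by rewrite /term !mulrA.
Qed.

End S.

Theorem mainTheorem12 (R : fieldType) (charR0 : [pchar R] =i pred0)
    (n : nat) (t : R) (x : nat -> R) :
  \sum_(m : {ffun 'I_n -> 'I_n.+1}) term n t x (fun i => nat_of_ord (m i))
  = \prod_(i < n) (1 + t * x i.+1).
Proof. by apply: (@main_gen R charR0 n n.+1). Qed.
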